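(* Let $\Phi=\forall u_1\ldots\forall u_n\exists e_1(D_1)\ldots\exists e_m(D_m).\varphi$ be a DQBF. In any run of Algorithm 1 (as described in the context) on $\Phi$, for each clause $C$ added to the clause set $\mathcal{C}$ in Phase 2, some clause $C'\subseteq C$ (reading each arbiter variable $e^\sigma$ as the annotated variable $e^\sigma$) is derivable from $\Phi$ in the $\forall$Exp+Res calculus.
   Context: For a set $V$ of variables, $[V]$ is the set of assignments $V\to\{\textsc{true},\textsc{false}\}$; assignments are identified with terms of the literals they make true, $\neg\sigma$ is the clause of the negations of these literals, and $\sigma|_W$ denotes restriction. A DQBF is $\Phi=\forall u_1\ldots\forall u_n\exists e_1(D_1)\ldots\exists e_m(D_m).\varphi$ with pairwise distinct variables, $U=\{u_i\}$, $E=\{e_j\}$, dependency sets $D(e_j)=D_j\subseteq U$, $\varphi$ a CNF over $U\cup E$. A definition of a variable $x$ by a set $X$ in a formula $\chi$ is a formula $\psi$ with $\mathit{var}(\psi)\subseteq X$ such that every satisfying assignment $\lambda$ of $\chi$ has $\lambda(x)=\psi[\lambda]$. Arbiter variables $e^\sigma$ ($e\in E$, $\sigma\in[D(e)]$) are fresh variables. Algorithm 1. Phase 1: set $A=\emptyset$, $\varphi_A=\emptyset$, $\psi_{\mathit{Def}}=$ empty conjunction. For $i=1,\dots,m$: while $e_i$ has no definition by $A\cup D_i$ in $\varphi\wedge\varphi_A$, choose $\xi\in[D_i\cup A]$ such that both $\varphi\wedge\varphi_A\wedge\xi\wedge e_i$ and $\varphi\wedge\varphi_A\wedge\xi\wedge\neg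 e_i$ are satisfiable, let $\sigma=\xi|_{D_i}$, add $e_i^\sigma$ to $A$ and the clauses $(e_i^\sigma\vee\neg\sigma\vee\neg e_i)$, $(\neg e_i^\sigma\vee\neg\sigma\vee e_i)$ to $\varphi_A$. Then choose a definition $\psi^i$ of $e_i$ by $A\cup D_i$ in $\varphi\wedge\varphi_A$ and conjoin $(e_i\leftrightarrow\psi^i)$ to $\psi_{\mathit{Def}}$. Phase 2: let $\tau\in[A]$ set all arbiter variables true, $\mathcal{C}=\emptyset$. Repeat: if $\neg\varphi\wedge\psi_{\mathit{Def}}\wedge\tau$ is unsatisfiable, return TRUE; otherwise choose a satisfying assignment $\sigma$ of it, choose a subset $\rho$ of the literals of $\tau\wedge\sigma|_U$ with $\varphi\wedge\varphi_A\wedge\rho$ unsatisfiable, add the clause $\neg(\rho|_A)$ to $\mathcal{C}$; if $\mathcal{C}$ is satisfiable, let $\tau\in[A]$ satisfy $\mathcal{C}$ and repeat, else return FALSE. The $\forall$Exp+Res calculus for $\Phi$ works on clauses over annotated variables $x^\tau$ ($x\in E$, $\tau\in[D(x)]$; different annotations give different variables; $\ell^\tau$ is the literal on $\mathit{var}(\ell)^\tau$ with the polarity of $\ell$) with rules: (axiom) for any $C\in\varphi$ and any $\sigma\in[U]$ falsifying every universal literal of $C$, derive $\{\ell^{\sigma|_{D(\mathit{var}(\ell))}}\mid\ell\in C,\ \mathit{var}(\ell)\in E\}$; (resolution) from $C_1\cup\{x^\tau\}$ and $C_2\cup\{\neg x^\tau\}$ derive $C_1\cup C_2$. A clause is derivable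 if it ends a finite sequence of clauses each obtained by a rule from earlier ones. *)

(* Defs.v *)
From mathcomp Require Import all_boot.
Set Implicit Arguments. Unset Strict Implicit. Unset Printing Implicit Defensive.

Inductive formula (V : Type) : Type :=
| FVar of V
| FConst of bool
| FNot of formula V
| FAnd of formula V & formula V
| FOr of formula V & formula V.

Fixpoint feval (V : Type) (l : V -> bool) (f : formula V) : bool :=
  match f with
  | FVar v => l v
  | FConst b => b
  | FNot g => ~~ feval l g
  | FAnd g h => feval l g && feval l h
  | FOr g h => feval l g || feval l h
  end.

Fixpoint fvars_in (V : Type) (X : V -> bool) (f : formula V) : Prop :=
  match f with
  | FVar v => X v
  | FConst _ => True
  | FNot g => fvars_in X g
  | FAnd g h | FOr g h => fvars_in X g /\ fvars_in X h
  end.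

Section DQBF.
(* universal variables u_1..u_n are 'I_n, existential e_1..e_m are 'I_m *)
Variables (n m : nat).

(* An arbiter variable e_j^sigma / annotated variable e_j^sigma, sigma ∈ [D_j],
   is represented as (j, T) where T ⊆ D_j is the set of universals sigma sets true. *)
Definition avar := ('I_m * {set 'I_n})%type.
Definition var := ('I_n + 'I_m + avar)%type.
Definition uvar (u : 'I_n) : var := inl (inl u).
Definition evar (j : 'I_m) : var := inl (inr j).
Definition arbvar (a : avar) : var := inr a.
Definition is_uvar (v : var) : bool := if v is inl (inl _) then true else false.
Definition is_arb (v : var) : bool := if v is inr _ then true else false.

(* literal (v, b): v if b = true, ¬v if b = false *)
Definition lit := (var * bool)%type.
Definition clause := seq lit.
Definition cnf := seq clause.
Definition asg := var -> bool.
Definition sat_lit (l : asg) (x : lit) : bool := l x.1 == x.2.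
Definition sat_clause (l : asg) (C : clause) : bool := has (sat_lit l) C.
Definition sat_cnf (l : asg) (F : cnf) : bool := all (sat_clause l) F.

(* The matrix of a DQBF is a CNF over U ∪ E (arbiter variables are fresh). *)
Definition matrix_wf (phi : cnf) : Prop :=
  forall C x, C \in phi -> x \in C -> ~~ is_arb x.1.

Definition agree_on (X : var -> bool) (l l' : asg) : Prop :=
  forall v, X v -> l v = l' v.

Definition is_definition (x : var) (X : var -> bool) (chi : cnf)
  (psi : formula var) : Prop :=
  fvars_in X psi /\ forall l, sat_cnf l chi -> l x = feval l psi.

Variables (D : 'I_m -> {set 'I_n}) (phi : cnf).

Definition neg_term (j : 'I_m) (T : {set 'I_n}) : clause :=
  [seq (uvar u, u \notin T) | u <- enum (D j)].

Definition arb_clauses (a : avar) : cnf :=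
  [:: [:: (arbvar a, true), (evar a.1, false) & neg_term a.1 a.2];
      [:: (arbvar a, false), (evar a.1, true) & neg_term a.1 a.2]].

Definition phiA (A : seq avar) : cnf := flatten (map arb_clauses A).

Definition inDA (i : 'I_m) (A : seq avar) (v : var) : bool :=
  match v with
  | inl (inl u) => u \in D i
  | inl (inr _) => false
  | inr a => a \in A
  end.

Definition inA (A : seq avar) (v : var) : bool :=
  if v is inr a then a \in A else false.

(* Phase 1: phase1 k A Defs means that after processing e_1..e_k (0-based: the
   existentials with index < k) the arbiter set is A and the chosen definitions
   (conjuncts e_i <-> psi^i of psi_Def) are Defs. *)
Inductive phase1 : nat -> seq avar -> seq ('I_m * formula var) -> Prop :=
| P1_start : phase1 0 [::] [::]
| P1_arb k A Ds (i : 'I_m) (xi : asg) :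
    phase1 k A Ds -> val i = k ->
    ~ (exists psi, is_definition (evar i) (inDA i A) (phi ++ phiA A) psi) ->
    (exists l, [/\ sat_cnf l (phi ++ phiA A), agree_on (inDA i A) l xi
                 & l (evar i) = true]) ->
    (exists l, [/\ sat_cnf l (phi ++ phiA A), agree_on (inDA i A) l xi
                 & l (evar i) = false]) ->
    phase1 k (rcons A (i, [set u in D i | xi (uvar u)])) Ds
| P1_def k A Ds (i : 'I_m) (psi : formula var) :
    phase1 k A Ds -> val i = k ->
    is_definition (evar i) (inDA i A) (phi ++ phiA A) psi ->
    phase1 k.+1 A (rcons Ds (i, psi)).

Definition sat_defs (Ds : seq ('I_m * formula var)) (l : asg) : Prop :=
  all (fun d => l (evar d.1) == feval l d.2) Ds.

Definition rho_ok (A : seq avar) (tau sigma : asg) (rho : seq lit) : Prop :=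
  forall x, x \in rho ->
    (inA A x.1 && (x.2 == tau x.1)) || (is_uvar x.1 && (x.2 == sigma x.1)).

Definition neg_arb_part (rho : seq lit) : clause :=
  [seq (x.1, ~~ x.2) | x <- rho & is_arb x.1].

(* the choices made in one iteration of Phase 2 leading to a new clause *)
Definition p2_choice (A : seq avar) (Ds : seq ('I_m * formula var))
  (tau sigma : asg) (rho : seq lit) : Prop :=
  [/\ ~~ sat_cnf sigma phi, sat_defs Ds sigma, agree_on (inA A) sigma tau,
      rho_ok A tau sigma rho &
      ~ (exists l, sat_cnf l (phi ++ phiA A) && all (sat_lit l) rho)].

Inductive phase2 (A : seq avar) (Ds : seq ('I_m * formula var)) :
  asg -> seq clause -> Prop :=
| P2_start : phase2 A Ds (fun _ => true) [::]
| P2_step tau Cs sigma rho tau' :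
    phase2 A Ds tau Cs -> p2_choice A Ds tau sigma rho ->
    sat_cnf tau' (rcons Cs (neg_arb_part rho)) ->
    phase2 A Ds tau' (rcons Cs (neg_arb_part rho)).

Definition added_clause (C : clause) : Prop :=
  exists A Ds tau Cs sigma rho,
    [/\ phase1 m A Ds, phase2 A Ds tau Cs, p2_choice A Ds tau sigma rho
      & C = neg_arb_part rho].

Definition alit := (avar * bool)%type.
Definition aclause := {set alit}.

(* axiom instance of C under sigma ∈ [U] given by the set S of true universals *)
Definition axiom_clause (C : clause) (S : {set 'I_n}) : aclause :=
  [set x : alit | has (fun y : lit =>
     match y.1 with
     | inl (inr j) => (x.1 == (j, S :&: D j)) && (x.2 == y.2)
     | _ => false
     end) C].

Inductive derivable : aclause -> Prop :=
| Der_axiom (C : clause) (S : {set 'I_n}) :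
    C \in phi ->
    (forall u b, (uvar u, b) \in C -> (u \in S) != b) ->
    derivable (axiom_clause C S)
| Der_res (C1 C2 : aclause) (x : avar) :
    derivable (C1 :|: [set (x, true)]) ->
    derivable (C2 :|: [set (x, false)]) ->
    derivable (C1 :|: C2).

End DQBF.

(* Main.v *)
Require Import Defs.
From mathcomp Require Import all_boot.
Set Implicit Arguments. Unset Strict Implicit. Unset Printing Implicit Defensive.

Section Res.
Variables (n m : nat) (D : 'I_m -> {set 'I_n}) (phi : cnf n m).

Definition upd (beta : avar n m -> bool) (a : avar n m) (b : bool) :=
  fun v => if v == a then b else beta v.

Lemma branch (X : {set avar n m}) beta a b (C : aclause n m) :
  a \notin X ->
  (forall x, x \in C -> x.1 \in a |: X /\ upd beta a b x.1 != x.2) ->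
  forall x, x \in C -> x != (a, ~~ b) -> x.1 \in X /\ beta x.1 != x.2.
Proof.
move=> aX H [v c] /H /= [] /setU1P [-> | vX]; rewrite /upd.
  by rewrite eqxx; clear H; case: b; case: (c : bool); rewrite /= ?eqxx.
have va : v != a by apply: contraNneq aX => <-.
by rewrite (negbTE va) => Hc _.
Qed.

Lemma res_complete k : forall (X : {set avar n m}) (beta : avar n m -> bool),
  #|~: X| = k ->
  (forall alpha : avar n m -> bool, (forall a, a \in X -> alpha a = beta a) ->
     exists C, derivable D phi C /\ forall x, x \in C -> alpha x.1 != x.2) ->
  exists C, derivable D phi C /\ forall x, x \in C -> x.1 \in X /\ beta x.1 != x.2.
Proof.
elim: k => [|k IH] X beta Hk H.
  have XT : ~: X = set0 by apply/cards0_eq.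
  have [C [dC HC]] := H beta (fun _ _ => erefl).
  exists C; split => // x xC; split; last by apply: HC.
  by apply/negPn; rewrite -in_setC XT inE.
have [a aX] : exists a, a \in ~: X.
  by apply/set0Pn; apply/eqP => E; rewrite E cards0 in Hk.
rewrite inE in aX.
have Hk' : #|~: (a |: X)| = k.
  move: Hk; rewrite setCU (cardsD1 a (~: X)) inE aX add1n => -[] <-.
  by rewrite setDE setIC.
have sub b : exists C, derivable D phi C /\ forall x, x \in C -> x.1 \in a |: X /\ upd beta a b x.1 != x.2.
  apply: IH Hk' _ => alpha Ha; apply: H => v vX.
  have va : v != a by apply: contraNneq aX => <-.
  by rewrite Ha ?inE ?vX ?orbT // /upd (negbTE va).
have [C1 [d1 H1]] := sub true.
have [C2 [d2 H2]] := sub false.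
have B1 := branch aX H1; have B2 := branch aX H2.
case: (boolP ((a, false) \in C1)) => a1; last first.
  exists C1; split => // x xC; apply: B1 => //; apply: contraNneq a1 => <-; done.
case: (boolP ((a, true) \in C2)) => a2; last first.
  exists C2; split => // x xC; apply: B2 => //; apply: contraNneq a2 => <-; done.
exists ((C2 :\ (a, true)) :|: (C1 :\ (a, false))); split.
  apply: Der_res (a) _ _.
    by rewrite setUC setD1K.
  by rewrite setUC setD1K.
move=> x /setUP [] /setD1P [xn xC].
  by apply: B2.
by apply: B1.
Qed.
End Res.

Lemma phase1_sub n m (D : 'I_m -> {set 'I_n}) (phi : cnf n m) k A Ds :
  phase1 D phi k A Ds -> forall a, a \in A -> a.2 \subset D a.1.
Proof.
elim => // {}k {}A {}Ds i xi _ IH _ _ _ _ a.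
rewrite mem_rcons inE => /predU1P [-> | /IH //].
by apply/subsetP => u; rewrite inE => /andP [].
Qed.

Theorem proposition1 (n m : nat) (D : 'I_m -> {set 'I_n}) (phi : cnf n m) :
  matrix_wf phi ->
  forall C : clause n m, added_clause D phi C ->
  exists C' : aclause n m,
    derivable D phi C' /\
    (forall (a : avar n m) (b : bool), (a, b) \in C' -> (arbvar a, b) \in C).
Proof.
move=> _ C [A [Ds [tau [Cs [sigma [rho [P1 _ [nphi sdefs agr rok unsat] ->]]]]]]].
have Asub := phase1_sub P1.
pose X := [set a | (arbvar a, tau (arbvar a)) \in rho].
pose S := [set u : 'I_n | sigma (@uvar n m u)].
edestruct (@res_complete n m D phi _ X (fun a => tau (arbvar a)) erefl) as [C' [dC HC]] .
  move=> alpha Ha.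
  pose l : asg n m := fun v => match v with
    | inl (inl u) => sigma v | inl (inr j) => alpha (j, S :&: D j) | inr a => alpha a end.
  have : ~~ sat_cnf l (phi ++ phiA D A).
    apply/negP => sl; apply: unsat; exists l; rewrite sl /=.
    apply/allP => -[v c] /[dup] vr /rok /orP [] /andP [].
      case: v vr => [//|a] vr _ /eqP /= ct; subst c.
      by rewrite /sat_lit /= Ha // inE.
    by case: v vr => [[u|//]|//] vr _ /eqP /= ->; rewrite /sat_lit /=.
  case/allPn => Cl; rewrite mem_cat => /orP [] ClP nsat.
    exists (axiom_clause D Cl S); split.
      apply: Der_axiom => // u b ub.
      have := hasPn nsat _ ub; rewrite /sat_lit /= inE.
      done.
    move=> x; rewrite inE => /hasP [[v c] vC].
    case: v vC => [[//|j]|//] vC /= /andP [/eqP -> /eqP ->] /=.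
    by have := hasPn nsat _ vC.
  exfalso; case/flattenP: ClP => s /mapP [a aA ->] ClP.
  have SD : forall T : {set 'I_n}, T \subset D a.1 ->
     ~~ has (sat_lit l) (neg_term D a.1 T) -> S :&: D a.1 = T.
    move=> T TD /hasPn nh; apply/setP => u; rewrite !inE.
    case uD: (u \in D a.1); last first.
      by rewrite andbF; apply/esym/negbTE; apply: contraFN uD; apply: (subsetP TD).
    have := nh (@uvar n m u, u \notin T); rewrite /sat_lit /=.
    rewrite (map_f (fun u => (@uvar n m u, u \notin T))) ?mem_enum // => /(_ erefl).
    by rewrite andbT; case: (sigma _); case: (u \in T).
  move: ClP nsat; rewrite !inE => /orP [] /eqP ->; rewrite /sat_clause /=;
    rewrite /sat_lit /= !negb_or => /and3P [h1 h2 /(SD _ (Asub _ aA))];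
    clear SD; case: a aA h1 h2 => j T aA /= h1 h2 E; rewrite E in h2;
    by move: h1 h2; case: (alpha (j, T)).
exists C'; split => // a b /HC /= [aX bt].
rewrite /neg_arb_part; apply/mapP; exists (arbvar a, tau (arbvar a)).
  by rewrite mem_filter /=; rewrite inE in aX.
by rewrite /=; move: bt; case: b; case: (tau _).
Qed.
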